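(* Let $\Bbbk$ be an algebraically closed field of characteristic $2$ and let $\mathfrak{u}(\mathfrak{m})$ be the algebra generated by $a,b,c$ with relations $ab+ba=c$, $ac+ca=a$, $bc+cb=b$, $a^4=b^4=0$, $c^2+c=0$. Then $\operatorname{Ext}^1_{\mathfrak{u}(\mathfrak{m})}(V_1,V_1)=0$.
   Context: $V_1$ is the three-dimensional module with basis $v_1,v_2,v_3$ and action $av_1=v_2$, $av_2=v_3$, $av_3=0$; $bv_1=0$, $bv_2=v_1$, $bv_3=v_2$; $cv_1=v_1$, $cv_2=0$, $cv_3=v_3$. *)

(* Defs.v *)
From HB Require Import structures.
From mathcomp Require Import all_boot all_order all_algebra all_field.
Set Implicit Arguments. Unset Strict Implicit. Unset Printing Implicit Defensive.
Import GRing.Theory.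
Local Open Scope ring_scope.

(* Modules over u(m) = k<a,b,c>/(ab+ba-c, ac+ca-a, bc+cb-b, a^4, b^4, c^2+c)
   on k^n (row vectors): the generators a, b, c act by v |-> v *m A, v *m B,
   v *m C.  All defining relations are invariant under reversing the order of
   products, so the row-vector (right action) convention is harmless. *)
Definition um_rep (k : fieldType) (n : nat) (A B C : 'M[k]_n) : Prop :=
  A *m B + B *m A = C /\
  A *m C + C *m A = A /\
  B *m C + C *m B = B /\
  A *m A *m A *m A = 0 /\
  B *m B *m B *m B = 0 /\
  C *m C + C = 0.

Definition um_hom (k : fieldType) (m n : nat)
  (A B C : 'M[k]_m) (A' B' C' : 'M[k]_n) (f : 'M[k]_(m, n)) : Prop :=
  [/\ A *m f = f *m A', B *m f = f *m B' & C *m f = f *m C'].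

(* Ext^1(V, V) = 0 (Yoneda description): every short exact sequence of
   u(m)-modules 0 -> V --i--> E --p--> V -> 0 splits.  (Any such E is finite
   dimensional, so E = k^n with some n.) *)
Definition Ext1_self_zero (k : fieldType) (m : nat) (A B C : 'M[k]_m) : Prop :=
  forall (n : nat) (A' B' C' : 'M[k]_n) (i : 'M[k]_(m, n)) (p : 'M[k]_(n, m)),
    um_rep A' B' C' ->
    um_hom A B C A' B' C' i -> um_hom A' B' C' A B C p ->
    row_free i -> row_full p -> i *m p = 0 -> (kermx p <= i)%MS ->
    exists s : 'M[k]_(m, n), um_hom A B C A' B' C' s /\ s *m p = 1%:M.

(* The module V_1 with basis v1,v2,v3 (indices 0,1,2); row j of the matrix
   is the image of v_(j+1). *)
Definition V1a (k : fieldType) : 'M[k]_3 :=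
  \matrix_(i < 3, j < 3) (if (j == i.+1 :> nat) then 1 else 0).
  (* a v1 = v2, a v2 = v3, a v3 = 0 *)
Definition V1b (k : fieldType) : 'M[k]_3 :=
  \matrix_(i < 3, j < 3) (if (j.+1 == i :> nat) then 1 else 0).
  (* b v1 = 0, b v2 = v1, b v3 = v2 *)
Definition V1c (k : fieldType) : 'M[k]_3 :=
  \matrix_(i < 3, j < 3) (if (i == j) && (i != 1 :> nat) then 1 else 0).
  (* c v1 = v1, c v2 = 0, c v3 = v3 *)

(* Main.v *)
Require Import Defs.
From HB Require Import structures.
From mathcomp Require Import all_boot all_order all_algebra all_field.
Import GRing.Theory.
Local Open Scope ring_scope.

Section Conc.
Variable k : fieldType.

Lemma rowV1a0 : row 0 (V1a k) = delta_mx 0 1.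
Proof. by apply/rowP => j; rewrite !mxE; case: j => [[|[|[|]]] ?]. Qed.
Lemma rowV1a1 : row 1 (V1a k) = delta_mx 0 2.
Proof. by apply/rowP => j; rewrite !mxE; case: j => [[|[|[|]]] ?]. Qed.
Lemma rowV1a2 : row 2 (V1a k) = 0.
Proof. by apply/rowP => j; rewrite !mxE; case: j => [[|[|[|]]] ?]. Qed.
Lemma rowV1b0 : row 0 (V1b k) = 0.
Proof. by apply/rowP => j; rewrite !mxE; case: j => [[|[|[|]]] ?]. Qed.
Lemma rowV1b1 : row 1 (V1b k) = delta_mx 0 0.
Proof. by apply/rowP => j; rewrite !mxE; case: j => [[|[|[|]]] ?]. Qed.
Lemma rowV1b2 : row 2 (V1b k) = delta_mx 0 1.
Proof. by apply/rowP => j; rewrite !mxE; case: j => [[|[|[|]]] ?]. Qed.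
Lemma rowV1c0 : row 0 (V1c k) = delta_mx 0 0.
Proof. by apply/rowP => j; rewrite !mxE; case: j => [[|[|[|]]] ?]. Qed.
Lemma rowV1c1 : row 1 (V1c k) = 0.
Proof. by apply/rowP => j; rewrite !mxE; case: j => [[|[|[|]]] ?]. Qed.
Lemma rowV1c2 : row 2 (V1c k) = delta_mx 0 2.
Proof. by apply/rowP => j; rewrite !mxE; case: j => [[|[|[|]]] ?]. Qed.

Lemma mulV (y : 'rV[k]_3) (M : 'M[k]_3) j :
  (y *m M) 0 j = y 0 0 * M 0 j + y 0 1 * M 1 j + y 0 2 * M 2 j.
Proof. rewrite !mxE !big_ord_recl big_ord0 addr0 addrA.
have E1 : lift ord0 ord0 = 1 :> 'I_3 by apply: val_inj.
have E2 : lift ord0 (lift ord0 ord0) = 2 :> 'I_3 by apply: val_inj.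
by rewrite E1 E2. Qed.

Lemma ord3 (j : 'I_3) : j = 0 \/ j = 1 \/ j = 2.
Proof. case: j => [[|[|[|]]] Hj] //; [left|right;left|right;right]; exact: val_inj. Qed.

Lemma yC0 (y : 'rV[k]_3) : y *m V1c k = 0 -> y 0 0 = 0 /\ y 0 2 = 0.
Proof.
move=> /rowP H; have := H 0; have := H 2; rewrite !mulV !mxE /=.
rewrite !mulr0 !mulr1 !addr0 ?add0r => h2 h0; by split. Qed.


Ltac simp := rewrite ?mulr0 ?mulr1 ?mul0r ?mul1r ?addr0 ?add0r.
Lemma factA (y : 'rV[k]_3) : y *m V1c k = 0 -> y *m V1a k *m V1b k = y.
Proof.
move=> /yC0 [h0 h2]; apply/rowP => j.
by case: (ord3 j) => [->|[->|->]]; rewrite !mulV !mxE /=; simp; rewrite ?h0 ?h2; simp.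
Qed.
Lemma factB (y : 'rV[k]_3) : y *m V1c k = 0 -> y *m V1a k *m V1c k = y *m V1a k.
Proof.
move=> /yC0 [h0 h2]; apply/rowP => j.
by case: (ord3 j) => [->|[->|->]]; rewrite !mulV !mxE /=; simp; rewrite ?h0 ?h2; simp.
Qed.
Lemma factC (y : 'rV[k]_3) : y *m V1c k = 0 -> y *m V1a k = 0 -> y = 0.
Proof.
move=> /yC0 [h0 h2] /rowP /(_ 2); rewrite mulV !mxE /=; simp => h1.
by apply/rowP => j; case: (ord3 j) => [->|[->|->]]; rewrite !mxE.
Qed.
End Conc.

Theorem lemma3p8 (k : closedFieldType) (hchar : 2%N \in [pchar k]) :
  Ext1_self_zero (V1a k) (V1b k) (V1c k).
Proof.
move=> n A' B' C' i p [hAB [hAC [hBC [hA4 [hB4 hCC]]]]] [iA iB iC] [pA pB pC] fi fp ip kp.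
have two : forall m1 m2 (M : 'M[k]_(m1, m2)), M + M = 0.
  by move=> m1 m2 M; rewrite -mulr2n -scaler_nat (GRing.pcharf0 hchar) scale0r.
have neg : forall m1 m2 (M : 'M[k]_(m1, m2)), - M = M.
  by move=> m1 m2 M; apply/eqP; rewrite eq_sym -subr_eq0 opprK two.
have CC : C' *m C' = C'.
  by apply/eqP; rewrite -[X in _ == X]neg -addr_eq0 hCC.
have BC : B' *m C' = B' - C' *m B' by apply/eqP; rewrite eq_sym subr_eq hBC.
have AC : A' *m C' = A' - C' *m A' by apply/eqP; rewrite eq_sym subr_eq hAC.
have AB : A' *m B' = C' - B' *m A' by apply/eqP; rewrite eq_sym subr_eq hAB.
have [P' hP'] := row_fullP fp.
have ker : forall x : 'rV[k]_n, x *m p = 0 -> exists y, x = y *m i.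
  move=> x hx; apply/submxP; apply: submx_trans kp; exact/sub_kermxP.
pose v1 : 'rV[k]_3 := delta_mx 0 0.
pose e0 := v1 *m P'.
have e0p : e0 *m p = v1 by rewrite /e0 -mulmxA hP' mulmx1.
pose e1 := e0 *m C'.
have e1C : e1 *m C' = e1 by rewrite /e1 -mulmxA CC.
have e1p : e1 *m p = v1 by rewrite /e1 -mulmxA pC mulmxA e0p /v1 -rowE rowV1c0.
pose w := e1 *m B'.
have wp : w *m p = 0 by rewrite /w -mulmxA pB mulmxA e1p /v1 -rowE rowV1b0.
have [y hy] := ker w wp.
have wC : w *m C' = 0 by rewrite /w -mulmxA BC mulmxBr mulmxA e1C subrr.
have yC : y *m V1c k = 0.
  apply: (row_free_inj fi); rewrite /= mul0mx -mulmxA iC mulmxA -hy wC //.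
pose z := y *m V1a k.
pose e := e1 - z *m i.
have eB : e *m B' = 0.
  by rewrite /e mulmxBl -/w hy /z -!mulmxA -iB !mulmxA factA // subrr.
have eC : e *m C' = e.
  by rewrite /e mulmxBl e1C /z -!mulmxA -iC !mulmxA factB.
have ep : e *m p = v1.
  by rewrite /e mulmxBl e1p -!mulmxA ip !mulmx0 subr0.
clearbody e.
have eA1 : e *m A' *m C' = 0 by rewrite -mulmxA AC mulmxBr mulmxA eC subrr.
have eA2 : e *m A' *m A' *m C' = e *m A' *m A'.
  by rewrite -(mulmxA (e *m A')) AC mulmxBr mulmxA eA1 mul0mx subr0.
have eA3 : e *m A' *m A' *m A' *m C' = 0.
  by rewrite -(mulmxA (e *m A' *m A')) AC mulmxBr mulmxA eA2 subrr.
have vA0 : v1 *m V1a k = delta_mx 0 1 by rewrite /v1 -rowE rowV1a0.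
have vA1 : (delta_mx 0 1 : 'rV[k]_3) *m V1a k = delta_mx 0 2 by rewrite -rowE rowV1a1.
have vA2 : (delta_mx 0 2 : 'rV[k]_3) *m V1a k = 0 by rewrite -rowE rowV1a2.
have eA1p : e *m A' *m p = delta_mx 0 1 by rewrite -mulmxA pA mulmxA ep vA0.
have eA2p : e *m A' *m A' *m p = delta_mx 0 2 by rewrite -mulmxA pA mulmxA eA1p vA1.
have eA3p : e *m A' *m A' *m A' *m p = 0 by rewrite -mulmxA pA mulmxA eA2p vA2.
have [u hu] := ker _ eA3p.
have uC : u *m V1c k = 0.
  apply: (row_free_inj fi); rewrite /= mul0mx -mulmxA iC mulmxA -hu eA3 //.
have uA : u *m V1a k = 0.
  apply: (row_free_inj fi); rewrite /= mul0mx -mulmxA iA mulmxA -hu.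
  have -> : e *m A' *m A' *m A' *m A' = e *m (A' *m A' *m A' *m A') by rewrite !mulmxA.
  by rewrite hA4 mulmx0.
have eA3z : e *m A' *m A' *m A' = 0 by rewrite hu (@factC _ u uC uA) mul0mx.
have eAB : e *m A' *m B' = e.
rewrite -mulmxA AB mulmxBr mulmxA eC.
rewrite (_ : e *m B' *m A' = 0) ?subr0 //. by rewrite eB; exact: mul0mx.
have eAAB : e *m A' *m A' *m B' = e *m A'.
  by rewrite -(mulmxA (e *m A')) AB mulmxBr mulmxA eA1 eAB sub0r neg.
pose s : 'M[k]_(3, n) := \matrix_(r < 3)
  (if r == 0 :> nat then e else if r == 1 :> nat then e *m A' else e *m A' *m A').
have s0 : row 0 s = e by rewrite rowK.
have s1 : row 1 s = e *m A' by rewrite rowK.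
have s2 : row 2 s = e *m A' *m A' by rewrite rowK.
exists s; split; first split.
- apply/row_matrixP => r; rewrite !row_mul.
  case: (ord3 r) => [->|[->|->]]; [rewrite rowV1a0|rewrite rowV1a1|rewrite rowV1a2];
    rewrite ?mul0mx -?rowE ?s0 ?s1 ?s2 //.
- apply/row_matrixP => r; rewrite !row_mul.
  case: (ord3 r) => [->|[->|->]]; [rewrite rowV1b0|rewrite rowV1b1|rewrite rowV1b2];
    rewrite ?mul0mx -?rowE ?s0 ?s1 ?s2 //.
- apply/row_matrixP => r; rewrite !row_mul.
  case: (ord3 r) => [->|[->|->]]; [rewrite rowV1c0|rewrite rowV1c1|rewrite rowV1c2];
    rewrite ?mul0mx -?rowE ?s0 ?s1 ?s2 //.
- apply/row_matrixP => r; rewrite row_mul row1.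
  case: (ord3 r) => [->|[->|->]]; rewrite ?s0 ?s1 ?s2 //.
Qed.
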